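(* Let $W$ be an eventually periodic subset of $\mathbb{Z}^d$ with periods $u_1,\dots,u_d$, and let $\mathscr{W}_1,\mathcal{W}$ be as defined in the context. Suppose $\mathscr{W}_1$ is nonempty and $\pi(\mathcal{W}\cup\mathscr{W}_1)=\mathbb{Z}^d/\mathcal{L}$. Then $W$ has a minimal complement in $\mathbb{Z}^d$.
   Context: $d\geqslant1$, $\mathbb{N}=\{0,1,2,\dots\}$. Let $u_1,\dots,u_d\in\mathbb{Z}^d$ satisfy no nontrivial $\mathbb{Z}$-linear relation, $\mathcal{L}=\mathbb{Z}u_1+\dots+\mathbb{Z}u_d$, $P=\mathbb{N}u_1+\dots+\mathbb{N}u_d$, $\pi:\mathbb{Z}^d\to\mathbb{Z}^d/\mathcal{L}$ the quotient map. A nonempty $X\subseteq\mathbb{Z}^d$ is eventually periodic with periods $u_1,\dots,u_d$ if $X\subseteq F+P$ for some nonempty finite $F\subseteq\mathbb{Z}^d$ and $x+P\subseteq X$ for all but finitely many $x\in X$. For such $W$: $\mathscr{W}=\{w\in W:w+P\not\subseteq W\}$; $\mathcal{W}=\{w\in W\setminus\mathscr{W}:(w-P)\cap(W\setminus\mathscr{W})=\{w\}\}$; $\mathscr{W}_1$ is the set of elements of $\mathscr{W}$ congruent modulo $\mathcal{L}$ to no element of $\mathcal{W}$. A nonempty $M\subseteq\mathbb{Z}^d$ is a complement of $W$ if $M+W=\mathbb{Z}^d$, and a minimal complement if no proper subset of $M$ is a complement of $W$. *)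

(* Defs.v *)
From mathcomp Require Import all_boot all_order all_algebra.
Set Implicit Arguments. Unset Strict Implicit. Unset Printing Implicit Defensive.
Import Order.TTheory GRing.Theory Num.Theory.
Local Open Scope ring_scope.

Definition vec (d : nat) := 'rV[int]_d.
Definition vset (d : nat) := vec d -> Prop.

Section Defs.
Variables (d : nat) (u : 'I_d -> vec d).

Definition Zindep : Prop :=
  forall c : 'I_d -> int, \sum_(i < d) c i *: u i = 0 -> forall i, c i = 0.

Definition inL (x : vec d) : Prop :=
  exists c : 'I_d -> int, x = \sum_(i < d) c i *: u i.

Definition inP (x : vec d) : Prop :=
  exists c : 'I_d -> nat, x = \sum_(i < d) (c i)%:Z *: u i.

Definition transl_P_sub (X : vset d) (x : vec d) : Prop :=
  forall p, inP p -> X (x + p).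

Definition eventually_periodic (X : vset d) : Prop :=
  (exists x, X x) /\
  (exists F : seq (vec d), F != [::] /\
     forall x, X x -> exists2 f, f \in F & inP (x - f)) /\
  (exists E : seq (vec d),
     forall x, X x -> ~ transl_P_sub X x -> x \in E).

Definition scrW (W : vset d) (w : vec d) : Prop :=
  W w /\ ~ transl_P_sub W w.

Definition calW (W : vset d) (w : vec d) : Prop :=
  (W w /\ ~ scrW W w) /\
  (forall v, (inP (w - v) /\ (W v /\ ~ scrW W v)) <-> v = w).

Definition scrW1 (W : vset d) (w : vec d) : Prop :=
  scrW W w /\ forall v, calW W v -> ~ inL (w - v).

End Defs.

Definition is_complement (d : nat) (W M : vset d) : Prop :=
  (exists m, M m) /\ forall x : vec d, exists m w, M m /\ W w /\ x = m + w.

Definition is_minimal_complement (d : nat) (W M : vset d) : Prop :=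
  is_complement W M /\
  ~ (exists M' : vset d, (forall x, M' x -> M x) /\ (exists x, M x /\ ~ M' x)
                         /\ is_complement W M').

(* Main.v *)
Require Import Defs.
From mathcomp Require Import all_boot all_order all_algebra.
From mathcomp Require Import zify ring.
From Stdlib Require Import Classical.
Import Order.TTheory GRing.Theory Num.Theory.
Local Open Scope ring_scope.
Set Implicit Arguments. Unset Strict Implicit.
Lemma exists_minimal (T : finType) (Pr : {set T} -> Prop) :
  Pr setT -> exists r, Pr r /\ forall x, x \in r -> ~ Pr (r :\ x).
Proof.
suff H : forall n (r : {set T}), #|r| = n -> Pr r ->
    exists r', Pr r' /\ forall x, x \in r' -> ~ Pr (r' :\ x).
  by move=> HT; exact: H _ _ erefl HT.
elim/ltn_ind => n IH r Hr Pr_r.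
case: (classic (exists x, x \in r /\ Pr (r :\ x))) => [[x [xr Px]] | Hno].
  apply: (IH #|r :\ x|) _ _ erefl Px.
  by rewrite -Hr; apply: proper_card; apply: properD1.
exists r; split => // x xr Px; apply: Hno; exists x; done.
Qed.

Definition res (d n : nat) (c : 'I_d -> int) : {ffun 'I_d -> 'I_n.+1} :=
  [ffun i => inord (absz (c i %% (n.+1)%:Z)%Z)].

Lemma res_mod_ge0 (n : nat) (a : int) : (0 <= (a %% (n.+1)%:Z)%Z)%R.
Proof. by apply: modz_ge0. Qed.

Lemma res_eqP d n (a b : 'I_d -> int) : res n a = res n b ->
  forall i, (a i %% (n.+1)%:Z = b i %% (n.+1)%:Z)%Z.
Proof.
move/ffunP => H i; have := H i; rewrite !ffunE => /(congr1 (@nat_of_ord _)).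
have lt1 : forall z : int, (absz (z %% (n.+1)%:Z)%Z < n.+1)%N.
  move=> z; have h1 := res_mod_ge0 n z.
  have h2 : (z %% (n.+1)%:Z < (n.+1)%:Z)%Z by apply: ltz_pmod.
  by rewrite -ltz_nat gez0_abs.
rewrite !inordK ?lt1 // => E.
by rewrite -(gez0_abs (res_mod_ge0 n (a i))) -(gez0_abs (res_mod_ge0 n (b i))) E.
Qed.

Lemma res_eq d n (a b : 'I_d -> int) :
  (forall i, (a i %% (n.+1)%:Z = b i %% (n.+1)%:Z)%Z) -> res n a = res n b.
Proof. by move=> H; apply/ffunP => i; rewrite !ffunE H. Qed.

Lemma small_dvd (n : nat) (z : int) : ((n.+1)%:Z %| z)%Z -> (absz z <= n)%N -> z = 0.
Proof.
case/dvdzP => q ->; rewrite abszM /= => h.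
have : (absz q = 0)%N by nia.
by move/eqP; rewrite absz_eq0 => /eqP ->; rewrite mul0r.
Qed.
Section S.
Variables (d : nat) (u : 'I_d -> vec d).
Hypothesis Hind : Zindep u.

Lemma coef_uniq (a b : 'I_d -> int) :
  \sum_i a i *: u i = \sum_i b i *: u i -> forall i, a i = b i.
Proof.
move=> H i; apply/eqP; rewrite -subr_eq0; apply/eqP.
apply: (Hind (c := fun j => a j - b j)) _ i => /=.
rewrite (eq_bigr (fun j => a j *: u j - b j *: u j)); last by move=> j _; rewrite scalerBl.
by rewrite sumrB H subrr.
Qed.

Lemma bound_list (X : seq (vec d)) : exists B : nat, forall x, x \in X ->
  forall k : 'I_d -> int, x = \sum_i k i *: u i -> forall i, (absz (k i) <= B)%N.
Proof.
elim: X => [|x X [B HB]]; first by exists 0%N => x; rewrite in_nil.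
case: (classic (exists k0 : 'I_d -> int, x = \sum_i k0 i *: u i)) => [[k0 Hk0]|Hno].
  exists (maxn B (\max_i absz (k0 i))) => y; rewrite inE => /orP [/eqP -> | Hy] k Hk i.
    have -> : k i = k0 i by apply: coef_uniq; rewrite -Hk -Hk0.
    apply: leq_trans _ (leq_maxr _ _); exact: (leq_bigmax (F := fun i => absz (k0 i)) i).
  exact: leq_trans (HB y Hy k Hk i) (leq_maxl _ _).
exists B => y; rewrite inE => /orP [/eqP -> | Hy] k Hk i.
  by exfalso; apply: Hno; exists k.
exact: HB y Hy k Hk i.
Qed.


Lemma sum_natZ (c e : 'I_d -> nat) :
  \sum_i ((c i + e i)%N)%:Z *: u i = \sum_i (c i)%:Z *: u i + \sum_i (e i)%:Z *: u i.
Proof. by rewrite -big_split; apply: eq_bigr => i _; rewrite PoszD scalerDl. Qed.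

Lemma calW_exists (W : vset d) (F : seq (vec d)) :
  (forall x, W x -> exists2 f, f \in F & inP u (x - f)) ->
  forall g, W g -> transl_P_sub u W g -> exists v, calW u W v /\ inL u (g - v).
Proof.
move=> HF g Wg Tg.
have [B HB] := bound_list [seq g - f | f <- F].
pose K := (d * B)%N.
pose Q (c : 'I_d -> nat) := W (g - \sum_i (c i)%:Z *: u i) /\
                            ~ scrW u W (g - \sum_i (c i)%:Z *: u i).
have Hbound : forall c, Q c -> (\sum_i c i <= K)%N.
  move=> c [Wc _]; have [f fF [e He]] := HF _ Wc.
  have Hgf : g - f = \sum_i ((c i + e i)%N)%:Z *: u i.
    by rewrite sum_natZ -He [X in _ = X]addrC addrAC subrK.
  have Hi := HB (g - f) (map_f _ fF) _ Hgf.
  have : (\sum_i c i <= \sum_(i < d) B)%N.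
    by apply: leq_sum => i _; exact: leq_trans (leq_addr (e i) (c i)) (Hi i).
  by rewrite sum_nat_const card_ord.
suff H : forall m c, (K - \sum_i c i)%N = m -> Q c -> exists v, calW u W v /\ inL u (g - v).
  apply: (H _ (fun _ => 0%N) erefl); rewrite /Q big1 ?subr0; last by move=> i _; rewrite scale0r.
  by split => // -[_]; apply.
elim/ltn_ind => m IH c Hm [Wv nsv].
set v := g - \sum_i (c i)%:Z *: u i in Wv nsv.
case: (classic (calW u W v)) => Hc.
  by exists v; split => //; exists (fun i => (c i)%:Z); rewrite /v subKr.
have [v' Hv'] : exists v', ~ ((inP u (v - v') /\ W v' /\ ~ scrW u W v') <-> v' = v).
  apply: NNPP => Hn; apply: Hc; split => // v'.
  by apply: NNPP => Hn2; apply: Hn; exists v'.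
have Hv'v : v' <> v.
  move=> E; apply: Hv'; split => // _; split; last by rewrite E.
  by exists (fun _ => 0%N); rewrite E subrr big1 // => i _; rewrite scale0r.
have [[c' Hc'] [Wv' nsv']] : inP u (v - v') /\ W v' /\ ~ scrW u W v'.
  by apply: NNPP => Hn; apply: Hv'; split => // E.
have Ev' : v' = g - \sum_i ((c i + c' i)%N)%:Z *: u i.
  have -> : v' = v - (v - v') by rewrite subKr.
  by rewrite Hc' sum_natZ opprD addrA.
have Q' : Q (fun i => (c i + c' i)%N) by rewrite /Q -Ev'.
have Hpos : (0 < \sum_i c' i)%N.
  case: (classic (exists i, c' i <> 0%N)) => [[i Hi]|Hno].
    rewrite (bigD1 i) //=; move: Hi; set z := \sum_(j | _) _; lia.
  exfalso; apply: Hv'v; apply/eqP; rewrite -subr_eq0 -opprB oppr_eq0 Hc'; apply/eqP.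
  apply: big1 => i _; have -> : c' i = 0%N by apply: NNPP => Hn; apply: Hno; exists i.
  by rewrite scale0r.
have Hb := Hbound _ Q'.
rewrite big_split /= in Hb.
apply: (IH (K - \sum_i (c i + c' i))%N) _ _ erefl Q'.
rewrite big_split /=; move: Hm Hb Hpos; set s1 := \sum_i c i; set s2 := \sum_i c' i; lia.
Qed.

End S.
Lemma res_of d n (rho : {ffun 'I_d -> 'I_n.+1}) (k : 'I_d -> int) :
  res n (fun i => (rho i)%:Z + k i * (n.+1)%:Z) = rho.
Proof.
apply/ffunP => i; rewrite ffunE addrC modzMDl modz_small /=.
  by apply: val_inj; rewrite /= inordK.
by rewrite ltz_nat.
Qed.

Lemma mod_shift (N : int) (a b z : int) :
  (a %% N = b %% N)%Z -> (a - b + z = z %[mod N])%Z.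
Proof.
move=> H; have /dvdzP [q Hq] : (N %| a - b)%Z by rewrite -eqz_mod_dvd H.
by rewrite Hq modzMDl.
Qed.

Lemma inL_add d (u : 'I_d -> vec d) x y : inL u x -> inL u y -> inL u (x + y).
Proof.
move=> [a ->] [b ->]; exists (fun i => a i + b i).
by rewrite -big_split; apply: eq_bigr => i _; rewrite scalerDl.
Qed.

Unset Implicit Arguments. Set Strict Implicit.
Theorem corollary4p14 (d : nat) (u : 'I_d -> vec d) (W : vset d) :
  (0 < d)%N ->
  Zindep u ->
  eventually_periodic u W ->
  (exists w, scrW1 u W w) ->
  (forall x : vec d, exists v, (calW u W v \/ scrW1 u W v) /\ inL u (x - v)) ->
  exists M : vset d, is_minimal_complement W M.
Proof.
move=> _ Hind [_ [[F [_ HF]] [E HE]]] [s0 [[Ws0 nTs0] Hs0]] Hcov.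
have [B HB] := bound_list Hind [seq e1 - e2 | e1 <- E, e2 <- E].
pose Mr (r : {set {ffun 'I_d -> 'I_B.+1}}) (x : vec d) :=
  exists c : 'I_d -> int, x = \sum_i c i *: u i /\ res B c \in r.
pose Cov r := forall x, exists m w, Mr r m /\ W w /\ x = m + w.
have CovT : Cov setT.
  move=> x; have [v [Hv [c Hc]]] := Hcov x.
  have Wv : W v by case: Hv => [[[]]|[[]]].
  by exists (x - v), v; split; [exists c; rewrite in_setT | split => //; rewrite subrK].
have [r [Covr Hmin]] := exists_minimal CovT.
exists (Mr r); split.
  split => //; have [m [w [Hm _]]] := Covr 0; by exists m.
move=> [M' [Hsub [[m0 [Mm0 nM'm0]] [_ HM']]]].
case: Mm0 => c0 [Em0 Hr0].
have [x [U1 U2]] : exists x,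
    (forall c w, res B c \in r -> res B c <> res B c0 -> W w -> x <> \sum_i c i *: u i + w) /\
    (forall g, W g -> transl_P_sub u W g -> ~ inL u (x - g)).
  case: (classic (exists rho, rho \in r /\ rho <> res B c0)) => [[rho [Hrr Hrne]] | Hno].
    have nC := Hmin _ Hr0.
    have [x Hx] : exists x, forall m w, Mr (r :\ res B c0) m -> W w -> x <> m + w.
      apply: NNPP => Hn; apply: nC => x; apply: NNPP => Hn2; apply: Hn; exists x => m w Hm Hw Ex.
      by apply: Hn2; exists m, w.
    exists x; split.
      move=> c w Hcr Hcne Hw Ex; apply: (Hx (\sum_i c i *: u i) w) => //.
      by exists c; split => //; rewrite in_setD1 Hcr andbT; apply/eqP.
    move=> g Wg Tg [a Ha].
    pose c' i := (rho i)%:Z + (- (absz (a i) + 1)%:Z) * (B.+1)%:Z.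
    have Hc'le : forall i, c' i <= a i.
      move=> i; rewrite /c'; have := ltn_ord (rho i); move: (nat_of_ord (rho i)) => k Hk.
      have Ha0 : (- (absz (a i))%:Z <= a i) by rewrite lerNl abszE -normrN; apply: ler_norm.
      rewrite mulNr; nia.
    pose p := \sum_i (absz (a i - c' i))%:Z *: u i.
    have Hp : p = (x - g) - \sum_i c' i *: u i.
      rewrite Ha -sumrB; apply: eq_bigr => i _; rewrite -scalerBl gez0_abs //.
      by rewrite subr_ge0.
    apply: (Hx (\sum_i c' i *: u i) (g + p)).
    - exists c'; split => //; rewrite res_of in_setD1 Hrr andbT; by apply/eqP.
    - by apply: Tg; exists (fun i => absz (a i - c' i)).
    - by rewrite Hp; apply/matrixP => i j; rewrite !mxE; ring.
  exists s0; split.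
    by move=> c w Hcr Hcne; exfalso; apply: Hno; exists (res B c).
  move=> g Wg Tg Hl; have [v [Hv Hgv]] := calW_exists Hind HF Wg Tg.
  apply: (Hs0 v Hv); have := inL_add Hl Hgv.
  have -> : s0 - g + (g - v) = s0 - v by apply/matrixP => i j; rewrite !mxE; ring.
  done.
have [m1 [w1 [[c1 [Em1 Hr1]] [Ww1 Ex]]]] := Covr x.
have Hc1 : res B c1 = res B c0.
  by apply: NNPP => Hn; apply: (U1 c1 w1 Hr1 Hn Ww1); rewrite -Em1.
have Ew1 : w1 \in E.
  apply: HE => // Tw1; apply: (U2 w1 Ww1 Tw1); exists c1.
  by rewrite Ex addrK.
have [m' [w' [HM'm' [Ww' Ex0]]]] := HM' (m0 + w1).
have [c' [Em' Hr']] := Hsub _ HM'm'.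
pose c'' i := c1 i - c0 i + c' i.
have Hr'' : res B c'' = res B c'.
  apply: res_eq => i; apply: mod_shift; exact: res_eqP Hc1 i.
have Ex'' : x = \sum_i c'' i *: u i + w'.
  have -> : \sum_i c'' i *: u i = m1 - m0 + m'.
    rewrite Em1 Em0 Em' -sumrB -big_split; apply: eq_bigr => i _.
    by rewrite scalerDl scalerBl.
  rewrite Ex; move/eqP: Ex0; rewrite -subr_eq0 => /eqP Ex0.
  apply/eqP; rewrite -subr_eq0 -Ex0; apply/eqP.
  by apply/matrixP => i j; rewrite !mxE; ring.
have Hc'0 : res B c' = res B c0.
  apply: NNPP => Hn; apply: (U1 c'' w'); rewrite ?Hr'' //.
have Ew' : w' \in E.
  apply: HE => // Tw'; apply: (U2 w' Ww' Tw'); exists c''.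
  by rewrite Ex'' addrK.
have Hdiff : w' - w1 = \sum_i (c0 i - c' i) *: u i.
  have -> : \sum_i (c0 i - c' i) *: u i = m0 - m'.
    rewrite Em0 Em' -sumrB; apply: eq_bigr => i _; by rewrite scalerBl.
  move/eqP: Ex0; rewrite -subr_eq0 => /eqP Ex0.
  apply/eqP; rewrite -subr_eq0 -oppr_eq0 -Ex0; apply/eqP.
  by apply/matrixP => i j; rewrite !mxE; ring.
have Hbd := HB _ (allpairs_f (fun e1 e2 => e1 - e2) Ew' Ew1) _ Hdiff.
have Heq : forall i, c0 i = c' i.
  move=> i; apply/eqP; rewrite -subr_eq0; apply/eqP; apply: (small_dvd (n := B)) (Hbd i).
  by rewrite -eqz_mod_dvd; apply/eqP; exact: esym (res_eqP Hc'0 i).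
apply: nM'm0; suff -> : m0 = m' by [].
by rewrite Em0 Em'; apply: eq_bigr => i _; rewrite Heq.
Qed.
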